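(* Let $X$ be a first-countable $T_0$ space such that for every $K\in\mathsf{K}(X)$ the set $\min(K)$ of minimal elements of $K$ is countable. Then the Smyth power space $P_S(X)$ is first-countable.
   Context: The specialization order of $X$ is $x\le y$ iff $x\in\overline{\{y\}}$; saturated sets are upper sets in this order. $\mathsf{K}(X)$ is the set of nonempty compact saturated subsets of $X$; $\min(K)$ is the set of minimal elements of $K$ with respect to the specialization order. For open $U\subseteq X$, $\Box U=\{K\in\mathsf{K}(X):K\subseteq U\}$; the Smyth power space $P_S(X)$ is $\mathsf{K}(X)$ with the topology having base $\{\Box U: U\text{ open}\}$ (upper Vietoris topology). *)

(* Defs.v *)
From Stdlib Require Import List.

Definition is_topology {X : Type} (opn : (X -> Prop) -> Prop) : Prop :=
  opn (fun _ => True) /\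
  (forall U V, opn U -> opn V -> opn (fun x => U x /\ V x)) /\
  (forall F : (X -> Prop) -> Prop, (forall U, F U -> opn U) ->
     opn (fun x => exists U, F U /\ U x)).

Definition T0 {X : Type} (opn : (X -> Prop) -> Prop) : Prop :=
  forall x y : X, (forall U, opn U -> (U x <-> U y)) -> x = y.

Definition first_countable {X : Type} (opn : (X -> Prop) -> Prop) : Prop :=
  forall x : X, exists B : nat -> (X -> Prop),
    (forall n, opn (B n) /\ B n x) /\
    (forall U, opn U -> U x -> exists n, forall z, B n z -> U z).

Definition countable_set {X : Type} (S : X -> Prop) : Prop :=
  exists g : X -> nat, forall x y, S x -> S y -> g x = g y -> x = y.

Definition spec_le {X : Type} (opn : (X -> Prop) -> Prop) (x y : X) : Prop :=
  forall U, opn U -> U x -> U y.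

Definition saturated {X : Type} (opn : (X -> Prop) -> Prop) (K : X -> Prop) : Prop :=
  forall x y, K x -> spec_le opn x y -> K y.

Definition compact {X : Type} (opn : (X -> Prop) -> Prop) (K : X -> Prop) : Prop :=
  forall F : (X -> Prop) -> Prop,
    (forall U, F U -> opn U) ->
    (forall x, K x -> exists U, F U /\ U x) ->
    exists l : list (X -> Prop),
      (forall U, In U l -> F U) /\
      (forall x, K x -> exists U, In U l /\ U x).

Definition inK {X : Type} (opn : (X -> Prop) -> Prop) (K : X -> Prop) : Prop :=
  (exists x, K x) /\ compact opn K /\ saturated opn K.

Definition minset {X : Type} (opn : (X -> Prop) -> Prop) (K : X -> Prop) : X -> Prop :=
  fun x => K x /\ (forall y, K y -> spec_le opn y x -> y = x).

Definition KX {X : Type} (opn : (X -> Prop) -> Prop) : Type :=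
  { K : X -> Prop | inK opn K }.

Definition box {X : Type} (opn : (X -> Prop) -> Prop) (U : X -> Prop) : KX opn -> Prop :=
  fun K => forall x, proj1_sig K x -> U x.

(* Upper Vietoris topology: generated by the base { Box U | U open },
   i.e. W is open iff it is a union of basic sets Box U. *)
Definition smyth_open {X : Type} (opn : (X -> Prop) -> Prop) (W : KX opn -> Prop) : Prop :=
  forall K, W K -> exists U, opn U /\ box opn U K /\ (forall L, box opn U L -> W L).

(* Main.v *)
Require Import Defs.
From Stdlib Require Import List.
From Stdlib Require Import Classical ClassicalEpsilon ProofIrrelevance.
From mathcomp Require Import ssreflect ssrfun ssrbool eqtype ssrnat seq choice.
From mathcomp Require Import boolp classical_sets.

Lemma spec_trans X opn (x y z : X) :
  spec_le opn x y -> spec_le opn y z -> spec_le opn x z.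
Proof. intros H1 H2 U HU Ux. exact (H2 U HU (H1 U HU Ux)). Qed.

Definition Vc {X} (opn : (X -> Prop) -> Prop) (c : X) : X -> Prop :=
  fun z => exists U, (opn U /\ ~ U c) /\ U z.

Lemma Vc_open X opn (Htop : is_topology opn) (c : X) : opn (Vc opn c).
Proof.
  destruct Htop as [_ [_ Hu]]. apply (Hu (fun U => opn U /\ ~ U c)).
  intros U [HU _]; exact HU.
Qed.

Lemma not_spec_Vc X opn (z c : X) : ~ spec_le opn z c -> Vc opn c z.
Proof.
  intro H. apply not_all_ex_not in H. destruct H as [U HU].
  exists U. apply imply_to_and in HU. destruct HU as [HU1 HU2].
  apply imply_to_and in HU2. destruct HU2. tauto.
Qed.

Lemma spec_not_Vc X opn (z c : X) : spec_le opn z c -> ~ Vc opn c z.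
Proof. intros H [U [[HU nU] Uz]]. exact (nU (H U HU Uz)). Qed.

Lemma chain_lb X opn (Htop : is_topology opn) (K : X -> Prop) (HK : compact opn K)
  (C : X -> Prop) (a0 : X) (Ca0 : C a0) (CK : forall c, C c -> K c)
  (Ctot : forall s t, C s -> C t -> spec_le opn s t \/ spec_le opn t s) :
  exists z, K z /\ forall c, C c -> spec_le opn z c.
Proof.
  apply NNPP. intro Hno.
  assert (Hcov : forall z, K z -> exists V, (exists c, C c /\ V = Vc opn c) /\ V z).
  { intros z Kz. apply NNPP; intro H2. apply Hno. exists z. split; [exact Kz|].
    intros c Cc. apply NNPP. intro H3. apply H2. exists (Vc opn c). split.
    - exists c; auto.
    - now apply not_spec_Vc. }
  destruct (HK (fun V => exists c, C c /\ V = Vc opn c)) as [l [Hl1 Hl2]].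
  { intros U [c [_ HUc]]. subst U. now apply Vc_open. }
  { exact Hcov. }
  assert (Hmin : forall l', (forall V, In V l' -> exists c, C c /\ V = Vc opn c) ->
     exists c0, C c0 /\ forall V, In V l' -> ~ V c0).
  { induction l' as [|V l' IH]; intros Hl'.
    - exists a0. split; [exact Ca0| intros V []].
    - destruct IH as [c0 [Cc0 Hc0]]. { intros V' HV'. apply Hl'. now right. }
      destruct (Hl' V (or_introl (erefl V))) as [c [Cc HVc]]. subst V.
      destruct (Ctot c0 c Cc0 Cc) as [H|H].
      + exists c0. split; [exact Cc0|]. intros V' [HV'|HV'].
        * subst V'. now apply spec_not_Vc.
        * now apply Hc0.
      + exists c. split; [exact Cc|]. intros V' [HV'|HV'].
        * subst V'. apply spec_not_Vc. intros U _ HU; exact HU.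
        * destruct (Hl' V' (or_intror HV')) as [c' [Cc' HV'c]]. subst V'.
          intros [U [[HU nU] Uc]]. apply (Hc0 _ HV'). exists U.
          split; [split; assumption|]. exact (H U HU Uc). }
  destruct (Hmin l Hl1) as [c0 [Cc0 Hc0]].
  destruct (Hl2 c0 (CK c0 Cc0)) as [V [HV Vc0]].
  exact (Hc0 V HV Vc0).
Qed.

Lemma exists_min X opn (Htop : is_topology opn) (HT0 : T0 opn) (K : X -> Prop)
  (HK : inK opn K) (x : X) (Kx : K x) :
  exists m, minset opn K m /\ spec_le opn m x.
Proof.
  destruct HK as [_ [HKc _]].
  pose T := {y : X | K y /\ spec_le opn y x}.
  pose R := fun (a b : T) => `[< spec_le opn (proj1_sig b) (proj1_sig a) >].
  destruct (@Zorn T R) as [t Ht].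
  - intro t. apply/asboolP. intros U _ H; exact H.
  - intros r s t Hrs Hst. apply/asboolP. move/asboolP: Hrs => Hrs.
    move/asboolP: Hst => Hst. exact (spec_trans _ _ _ _ _ Hst Hrs).
  - intros s t Hst Hts. move/asboolP: Hst => Hst. move/asboolP: Hts => Hts.
    destruct s as [s ps], t as [t pt]; simpl in *.
    assert (E : s = t).
    { apply HT0. intros U HU; split; [apply Hts| apply Hst]; auto. }
    subst t. f_equal. apply proof_irrelevance.
  - intros A HA. destruct (Classical_Prop.classic (exists a, A a)) as [[a0 Aa0]|Hne].
    + destruct (chain_lb X opn Htop K HKc (fun y => exists a, A a /\ proj1_sig a = y)
          (proj1_sig a0)) as [z [Kz Hz]].
      * exists a0; auto.
      * intros c [a [_ Ea]]. subst c. exact (proj1 (proj2_sig a)).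
      * intros s t [a [Aa Ea]] [b [Ab Eb]]. subst s t.
        destruct (HA a b Aa Ab) as [H|H]; move/asboolP: H => H; [right|left]; exact H.
      * assert (Hzx : spec_le opn z x).
        { eapply spec_trans. apply Hz. exists a0; split; [exact Aa0|reflexivity].
          exact (proj2 (proj2_sig a0)). }
        exists (exist _ z (conj Kz Hzx)). intros s As. apply/asboolP. simpl.
        apply Hz. exists s; auto.
    + exists (exist _ x (conj Kx (fun U _ H => H))). intros s As. exfalso.
      apply Hne. eauto.
  - exists (proj1_sig t). split; [split|].
    + exact (proj1 (proj2_sig t)).
    + intros y Ky Hy.
      assert (Hyx : spec_le opn y x).
      { eapply spec_trans; [exact Hy| exact (proj2 (proj2_sig t))]. }
      assert (Rt : R t (exist _ y (conj Ky Hyx))).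
      { apply/asboolP. exact Hy. }
      exact (f_equal (@proj1_sig _ _) (Ht _ Rt)).
    + exact (proj2 (proj2_sig t)).
Qed.

Theorem mainTheorem3 (X : Type) (opn : (X -> Prop) -> Prop)
  (Htop : is_topology opn) (HT0 : T0 opn) (Hfc : first_countable opn)
  (Hmin : forall K : X -> Prop, inK opn K -> countable_set (minset opn K)) :
  first_countable (smyth_open opn).
Proof.
  intro K0. destruct K0 as [K HK].
  destruct (Hmin K HK) as [g Hg].
  assert (HBex : exists B : X -> nat -> X -> Prop, forall x,
    (forall n, opn (B x n) /\ B x n x) /\
    (forall U, opn U -> U x -> exists n, forall z, B x n z -> U z)).
  { exists (fun x => proj1_sig (ClassicalEpsilon.constructive_indefinite_description _ (Hfc x))).
    intro x. exact (proj2_sig (ClassicalEpsilon.constructive_indefinite_description _ (Hfc x))). }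
  destruct HBex as [B HB].
  pose M := minset opn K.
  pose Fs := fun (s : seq (nat * nat)) (V : X -> Prop) =>
    exists p m, In p s /\ M m /\ g m = fst p /\ V = B m (snd p).
  pose Us := fun s (z : X) => exists V, Fs s V /\ V z.
  assert (Usopen : forall s, opn (Us s)).
  { intro s. destruct Htop as [_ [_ Hu]]. apply Hu.
    intros U [p [m [_ [_ [_ HUB]]]]]. subst U. apply HB. }
  pose sk := fun k : nat => match @unpickle (seq (nat * nat)) k with
                            | Some s => s | None => nil end.
  exists (fun k (L : KX opn) => (forall x, K x -> Us (sk k) x) -> box opn (Us (sk k)) L).
  split.
  - intro k. split.
    + intros L HL. destruct (Classical_Prop.classic (forall x, K x -> Us (sk k) x)) as [H|H].
      * exists (Us (sk k)). split; [apply Usopen|].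
        split; [exact (HL H)| intros L' HL' _; exact HL'].
      * exists (fun _ => True). split; [exact (proj1 Htop)|].
        split; [intros ? ?; exact I | intros L' _ H'; contradiction].
    + intro H. exact H.
  - intros W HW WK. destruct (HW _ WK) as [U [HU [KU HUW]]].
    pose F := fun V => exists m n, M m /\ V = B m n /\ (forall z, B m n z -> U z).
    destruct (proj1 (proj2 HK) F) as [l [Hl1 Hl2]].
    + intros V [m [n [_ [HV _]]]]. subst V. apply HB.
    + intros x Kx. destruct (exists_min X opn Htop HT0 K HK x Kx) as [m [Mm Hmx]].
      destruct (proj2 (HB m) U HU (KU m (proj1 Mm))) as [n Hn].
      exists (B m n). split.
      * exists m, n. auto.
      * apply Hmx; apply (proj1 (HB m) n).
    + assert (Hs : forall l', (forall V, In V l' -> F V) -> exists s : seq (nat * nat),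
        (forall V, In V l' -> exists p m, In p s /\ M m /\ g m = fst p /\ V = B m (snd p)) /\
        (forall p, In p s -> forall m, M m -> g m = fst p -> forall z, B m (snd p) z -> U z)).
      { induction l' as [|V l' IH]; intros Hl'.
        - exists nil. split; [intros V []| intros p []].
        - destruct IH as [s [Hs1 Hs2]]. { intros V' HV'. apply Hl'. now right. }
          destruct (Hl' V (or_introl (erefl V))) as [m [n [Mm [HV Hsub]]]].
          exists ((g m, n) :: s). split.
          + intros V' [HV'|HV'].
            * subst V'. exists (g m, n), m. simpl. auto.
            * destruct (Hs1 V' HV') as [p [m' [Hp R]]]. exists p, m'. split; [right; exact Hp| exact R].
          + intros p [Hp|Hp] m' Mm' Hg' z Hz.
            * subst p. simpl in *. assert (E : m' = m) by (apply Hg; auto). subst m'. auto.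
            * exact (Hs2 p Hp m' Mm' Hg' z Hz). }
      destruct (Hs l Hl1) as [s [Hs1 Hs2]].
      exists (pickle s). assert (Esk : sk (pickle s) = s).
      { unfold sk. rewrite pickleK. reflexivity. }
      rewrite Esk. intros L HL. apply HUW. intros z Lz.
      assert (Hcov : forall x, K x -> Us s x).
      { intros x Kx. destruct (Hl2 x Kx) as [V [HV Vx]].
        destruct (Hs1 V HV) as [p [m [Hp [Mm [gm HVB]]]]].
        exists V. split; [exists p, m; auto | exact Vx]. }
      destruct (HL Hcov z Lz) as [V [[p [m [Hp [Mm [gm HVB]]]]] Vz]].
      subst V. exact (Hs2 p Hp m Mm gm z Vz).
Qed.
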